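(* Consider the weighted-median opinion dynamics on a row-stochastic influence matrix $W$ with node set $V=\{1,\dots,n\}$. Suppose there is a nonempty maximal cohesive set $M\ne V$. Then there exists a set $X_0\subseteq\mathbb R^n$ of positive Lebesgue measure with the following property: for every $x(0)\in X_0$ and every sequence of updating nodes, the solution never reaches a consensus state (a vector with all entries equal). One such set is $$X_0=\Big\{x\in\mathbb R^n:\ \max_{j\in M}x_j<\min_{k\in V\setminus M}x_k \ \text{ or }\ \min_{j\in M}x_j>\max_{k\in V\setminus M}x_k\Big\}.$$
   Context: A matrix $W=(w_{ij})_{n\times n}$ is row-stochastic if $w_{ij}\ge 0$ for all $i,j$ and $\sum_{j=1}^n w_{ij}=1$ for every $i$. A set $M\subseteq V$ is cohesive if $\sum_{j\in M} w_{ij}\ge 1/2$ for every $i\in M$. A cohesive set $M$ is maximal cohesive if there is no $i\in V\setminus M$ with $\sum_{j\in M} w_{ij}>1/2$. A weighted median of $x\in\mathbb R^n$ with respect to row $i$ of $W$ is any $y\in\{x_1,\dots,x_n\}$ satisfying $\sum_{j:\,x_j<y}w_{ij}\le 1/2$ and $\sum_{j:\,x_j>y}w_{ij}\le 1/2$. $\mathrm{Med}_i(x;W)$ denotes this weighted median when it is unique. When it is not unique, $\mathrm{Med}_i(x;W)$ denotes the weighted median closest to $x_i$, which is then uniquely determined. Weighted-median opinion dynamics: given $x(0)\in\mathbb R^n$, at each time step $t+1$ ($t=0,1,2,\dots$) an index $i$ is drawn uniformly at random from $\{1,\dots,n\}$, independently of the past. Then $x_i(t+1)=\mathrm{Med}_i(x(t);W)$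 and $x_j(t+1)=x_j(t)$ for $j\ne i$. *)

(* Defs.v *)
(* Scalars range over an arbitrary realFieldType R
   (the paper's setting is R = the real numbers). *)
From HB Require Import structures.
From mathcomp Require Import all_boot all_order all_algebra.
Set Implicit Arguments. Unset Strict Implicit. Unset Printing Implicit Defensive.
Import Order.TTheory GRing.Theory Num.Theory.
Local Open Scope ring_scope.

Section WM.
Variables (R : realFieldType) (n : nat).

Definition row_stochastic (W : 'M[R]_n) : Prop :=
  (forall i j, 0 <= W i j) /\ (forall i, \sum_(j < n) W i j = 1).

Definition cohesive (W : 'M[R]_n) (M : {set 'I_n}) : Prop :=
  forall i, i \in M -> 1 / 2%:R <= \sum_(j in M) W i j.

Definition maximal_cohesive (W : 'M[R]_n) (M : {set 'I_n}) : Prop :=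
  cohesive W M /\ ~ (exists i, i \notin M /\ 1 / 2%:R < \sum_(j in M) W i j).

Definition is_wmedian (W : 'M[R]_n) (i : 'I_n) (x : 'I_n -> R) (y : R) : Prop :=
  [/\ exists j, y = x j,
      \sum_(j | x j < y) W i j <= 1 / 2%:R
    & \sum_(j | y < x j) W i j <= 1 / 2%:R].

Definition is_Med (W : 'M[R]_n) (i : 'I_n) (x : 'I_n -> R) (y : R) : Prop :=
  is_wmedian W i x y /\
  (forall z, is_wmedian W i x z -> `|y - x i| <= `|z - x i|).

Definition wm_step (W : 'M[R]_n) (i : 'I_n) (x x' : 'I_n -> R) : Prop :=
  is_Med W i x (x' i) /\ (forall j, j != i -> x' j = x j).

Definition wm_trajectory (W : 'M[R]_n) (s : nat -> 'I_n)
  (x : nat -> 'I_n -> R) : Prop :=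
  forall t, wm_step W (s t) (x t) (x t.+1).

Definition consensus (x : 'I_n -> R) : Prop := forall j k, x j = x k.

Definition inX0 (M : {set 'I_n}) (x : 'I_n -> R) : Prop :=
  (forall j k, j \in M -> k \notin M -> x j < x k) \/
  (forall j k, j \in M -> k \notin M -> x k < x j).

End WM.

(* Main.v *)
Require Import Defs.
From HB Require Import structures.
From mathcomp Require Import all_boot all_order all_algebra.
From mathcomp Require Import ring lra.
Import Order.TTheory GRing.Theory Num.Theory.
Local Open Scope ring_scope.
Lemma ex_argmax (R : realFieldType) (T : finType) (P : pred T) (F : T -> R) i0 :
  P i0 -> exists2 j, P j & forall k, P k -> F k <= F j.
Proof. move=> Pi0; case: (arg_maxP F Pi0) => j Pj H; exists j => //. Qed.
Lemma ex_argmin (R : realFieldType) (T : finType) (P : pred T) (F : T -> R) i0 :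
  P i0 -> exists2 j, P j & forall k, P k -> F j <= F k.
Proof. move=> Pi0; case: (arg_minP F Pi0) => j Pj H; exists j => //. Qed.
Lemma sub_sum (R : realFieldType) (T : finType) (P Q : pred T) (F : T -> R) :
  (forall j, P j -> Q j) -> (forall j, 0 <= F j) ->
  \sum_(j | P j) F j <= \sum_(j | Q j) F j.
Proof.
move=> PQ F0; rewrite big_mkcond [X in _ <= X]big_mkcond /=.
apply: ler_sum => j _; case: (boolP (P j)) => Pj; first by rewrite PQ.
by case: (Q j).
Qed.

Lemma sum_split (R : realFieldType) n (W : 'M[R]_n) (M : {set 'I_n}) i :
  row_stochastic W ->
  \sum_(j in M) W i j + \sum_(j | j \notin M) W i j = 1.
Proof. by case=> _ h; rewrite -(h i) [X in _ = X](bigID (mem M)). Qed.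

Lemma step_low (R : realFieldType) n (W : 'M[R]_n) (M : {set 'I_n}) i (x x' : 'I_n -> R) :
  row_stochastic W -> maximal_cohesive W M -> wm_step W i x x' ->
  (forall j k, j \in M -> k \notin M -> x j < x k) ->
  (forall j k, j \in M -> k \notin M -> x' j < x' k).
Proof.
move=> rs [coh nmax] [[[[j0 Ey] Hlo Hhi] Hclose] Hother] Hx.
have W0 : forall j, 0 <= W i j by case: rs => h _ j; apply: h.
have split := @sum_split R n W M i rs.
have A : i \in M -> forall k, k \notin M -> x' i < x k.
  move=> iM k kN; case: (boolP (j0 \in M)) => j0M; first by rewrite Ey; apply: Hx.
  exfalso.
  have h1 : \sum_(j in M) W i j <= 1 / 2%:R.
    apply: le_trans Hlo; apply: sub_sum => // j jM; rewrite Ey; exact: Hx.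
  have h2 := coh i iM.
  have [jm jmM Hjm] := @ex_argmax R _ (fun j => j \in M) x i iM.
  have med : is_wmedian W i x (x jm).
    split; first by exists jm.
    - apply: le_trans h1; apply: sub_sum => // l hl.
      by apply/negPn/negP => lN; have := Hx _ _ jmM lN; rewrite ltNge ltW.
    - have : \sum_(j | j \notin M) W i j <= 1 / 2%:R by lra.
      apply: le_trans; apply: sub_sum => // l hl.
      by apply/negP => lM; have := Hjm _ lM; rewrite leNgt hl.
  have := Hclose _ med.
  have e1 := Hjm _ iM; have e2 := Hx _ _ jmM j0M; rewrite Ey in e2 *.
  rewrite !ger0_norm; [lra | lra | lra].
have B : i \notin M -> forall j, j \in M -> x j < x' i.
  move=> iN j jM; case: (boolP (j0 \in M)) => j0M; last by rewrite Ey; apply: Hx.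
  exfalso.
  have h1 : \sum_(j | j \notin M) W i j <= 1 / 2%:R.
    apply: le_trans Hhi; apply: sub_sum => // l lN; rewrite Ey; exact: Hx.
  have h2 : \sum_(j in M) W i j <= 1 / 2%:R.
    by rewrite leNgt; apply/negP => h; apply: nmax; exists i.
  have [km kmN Hkm] := @ex_argmin R _ (fun j => j \notin M) x i iN.
  have med : is_wmedian W i x (x km).
    split; first by exists km.
    - apply: le_trans h2; apply: sub_sum => // l hl.
      by apply/negPn/negP => lN; have := Hkm _ lN; rewrite leNgt hl.
    - apply: le_trans h1; apply: sub_sum => // l hl.
      by apply/negP => lM; have := Hx _ _ lM kmN; rewrite ltNge ltW.
  have := Hclose _ med.
  have e1 := Hkm _ iN; have e2 := Hx _ _ j0M kmN; rewrite Ey in e2 *.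
  rewrite !ler0_norm; [lra | lra | lra].
move=> j k jM kN.
have [ji|ji] := eqVneq j i; have [ki|ki] := eqVneq k i.
- by move: jM kN; rewrite ji ki => ->.
- by rewrite ji (Hother k ki); apply: A; rewrite -?ji.
- by rewrite ki (Hother j ji); apply: B; rewrite -?ki.
- by rewrite (Hother j ji) (Hother k ki); apply: Hx.
Qed.

Lemma med_neg (R : realFieldType) n (W : 'M[R]_n) i (x : 'I_n -> R) y :
  is_wmedian W i x y -> is_wmedian W i (fun j => - x j) (- y).
Proof.
case=> [[j ->] h1 h2]; split; first by exists j.
- by under eq_bigl => l do rewrite ltrN2.
- by under eq_bigl => l do rewrite ltrN2.
Qed.

Lemma med_negI (R : realFieldType) n (W : 'M[R]_n) i (x : 'I_n -> R) z :
  is_wmedian W i (fun j => - x j) z -> is_wmedian W i x (- z).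
Proof.
case=> [[j ->] h1 h2]; split; first by exists j; rewrite opprK.
- by under eq_bigl => l do rewrite -ltrN2 opprK.
- by under eq_bigl => l do rewrite -ltrN2 opprK.
Qed.

Lemma step_neg (R : realFieldType) n (W : 'M[R]_n) i (x x' : 'I_n -> R) :
  wm_step W i x x' -> wm_step W i (fun j => - x j) (fun j => - x' j).
Proof.
case=> [[m c] o]; split; last by move=> j /o ->.
split; first exact: med_neg.
move=> z /med_negI /c h.
have -> : `|- x' i - - x i| = `|x' i - x i|.
  by rewrite -normrN; congr `|_|; ring.
have -> : `|z - - x i| = `|- z - x i|.
  by rewrite -normrN; congr `|_|; ring.
exact: h.
Qed.

Lemma step_high (R : realFieldType) n (W : 'M[R]_n) (M : {set 'I_n}) i (x x' : 'I_n -> R) :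
  row_stochastic W -> maximal_cohesive W M -> wm_step W i x x' ->
  (forall j k, j \in M -> k \notin M -> x k < x j) ->
  (forall j k, j \in M -> k \notin M -> x' k < x' j).
Proof.
move=> rs mc st Hx j k jM kN.
have HH : forall j' k', j' \in M -> k' \notin M -> - x j' < - x k'.
  by move=> j' k' j'M k'N; rewrite ltrN2; apply: Hx.
have /= := @step_low R n W M i _ _ rs mc (@step_neg R n W i x x' st) HH j k jM kN.
by rewrite ltrN2.
Qed.

Theorem mainTheorem9 (R : realFieldType) (n : nat) (W : 'M[R]_n)
    (M : {set 'I_n}) :
  row_stochastic W -> maximal_cohesive W M -> M != set0 -> M != setT ->
  [/\ (* X_0 is nonempty and open, hence of positive Lebesgue measure *)
      exists x0 : 'I_n -> R, inX0 M x0,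
      (forall x : 'I_n -> R, inX0 M x ->
         exists2 eps : R, 0 < eps &
           forall y : 'I_n -> R, (forall i, `|y i - x i| < eps) -> inX0 M y)
    & (* no solution starting in X_0 ever reaches consensus *)
      forall (s : nat -> 'I_n) (x : nat -> 'I_n -> R),
        inX0 M (x 0%N) -> wm_trajectory W s x -> forall t, ~ consensus (x t)].
Proof.
move=> rs mc /set0Pn [j1 j1M] MT.
have [k1 k1N] : exists k, k \notin M.
  case: (pickP (fun k => k \notin M)) => [k kN|H]; first by exists k.
  by move/eqP: MT; case; apply/setP => k; rewrite inE; have := H k => /negbFE.
pose P := fun p : 'I_n * 'I_n => (p.1 \in M) && (p.2 \notin M).
have P0 : P (j1, k1) by rewrite /P /= j1M k1N.
split.
- exists (fun j => if j \in M then 0 else 1); left => j k -> /negbTE ->.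
  exact: ltr01.
- move=> x [Hx|Hx].
  + have [[jm km] /andP [/= jmM kmN] Hm] :=
      @ex_argmin R _ P (fun p : 'I_n * 'I_n => x p.2 - x p.1) (j1, k1) P0.
    have hp := Hx _ _ jmM kmN.
    exists ((x km - x jm) / 2%:R); first by lra.
    move=> y Hy; left => j k jM kN.
    have := Hm (j, k); rewrite /P /= jM kN /= => /(_ isT) hm.
    move/ltr_normlP: (Hy j) => [a1 a2]; move/ltr_normlP: (Hy k) => [b1 b2].
    lra.
  + have [[jm km] /andP [/= jmM kmN] Hm] :=
      @ex_argmin R _ P (fun p : 'I_n * 'I_n => x p.1 - x p.2) (j1, k1) P0.
    have hp := Hx _ _ jmM kmN.
    exists ((x jm - x km) / 2%:R); first by lra.
    move=> y Hy; right => j k jM kN.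
    have := Hm (j, k); rewrite /P /= jM kN /= => /(_ isT) hm.
    move/ltr_normlP: (Hy j) => [a1 a2]; move/ltr_normlP: (Hy k) => [b1 b2].
    lra.
- move=> s x H0 Htr t.
  have inv : inX0 M (x t).
    elim: t => // t [IH|IH].
    + by left; exact: (@step_low R n W M (s t) (x t) (x t.+1) rs mc (Htr t) IH).
    + by right; exact: (@step_high R n W M (s t) (x t) (x t.+1) rs mc (Htr t) IH).
  move=> C; by case: inv => h; have := h _ _ j1M k1N; rewrite (C j1 k1) ltxx.
Qed.
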